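(* Let $n\geq 4$ and let $\mathcal{H}_{2n}$ be the collection of subsets of $\{1,\dots,2n\}$ of the form $\{1,2,2k-1,2k\}$ for $2\le k\le n$, or $\{2k-1,2k,2k+1,2k+2\}$ for $2\le k\le n-1$. Then the collection of all subsets $B\subset\{1,\dots,2n\}$ with $|B|=4$ and $B\notin\mathcal{H}_{2n}$ is the set of bases of a (rank-four) matroid on $\{1,\dots,2n\}$ (called the $2n$-Vámos matroid $V_{2n}$).
   Context: A matroid on a finite set $E$ is given by a nonempty collection of independent sets closed under taking subsets and satisfying the exchange axiom; its bases are the maximal independent sets. *)

(* Defs.v *)
From mathcomp Require Import all_boot.
Set Implicit Arguments. Unset Strict Implicit. Unset Printing Implicit Defensive.

Definition is_matroid (T : finType) (I : {set {set T}}) : Prop :=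
  [/\ I != set0,
      (forall A B : {set T}, B \in I -> A \subset B -> A \in I) &
      (forall A B : {set T}, A \in I -> B \in I -> #|A| < #|B| ->
         exists2 x, x \in B :\: A & x |: A \in I)].

Definition matroid_bases (T : finType) (I : {set {set T}}) : {set {set T}} :=
  [set B in I | [forall C in I, (B \subset C) ==> (C == B)]].

(* Ground set {1,...,2n} is represented by 'I_(2n), element i <-> i+1.
   Hence {1,2,2k-1,2k} becomes {0,1,2k-2,2k-1} and
   {2k-1,2k,2k+1,2k+2} becomes {2k-2,2k-1,2k,2k+1}. *)
Definition in_H (n : nat) (B : {set 'I_(2 * n)}) : bool :=
  [exists k : 'I_n.+1, (2 <= k) &&
     [forall x : 'I_(2 * n), (x \in B) == (val x \in [:: 0; 1; 2 * k - 2; 2 * k - 1])]]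
  || [exists k : 'I_n, (2 <= k) &&
     [forall x : 'I_(2 * n), (x \in B) == (val x \in [:: 2 * k - 2; 2 * k - 1; 2 * k; 2 * k + 1])]].

(* Main.v *)
Require Import Defs.
From mathcomp Require Import all_boot.
From mathcomp Require Import zify.
Set Implicit Arguments. Unset Strict Implicit. Unset Printing Implicit Defensive.

Definition pairset (m a b : nat) : {set 'I_m} :=
  [set x : 'I_m | ((val x)./2 == a) || ((val x)./2 == b)].

Lemma card_samehalf m (A : {set 'I_m}) :
  (forall x y, x \in A -> y \in A -> (val x)./2 = (val y)./2) -> #|A| <= 2.
Proof.
move=> H.
apply: (leq_trans (@leq_card_in _ _ (fun x : 'I_m => odd (val x)) A _)); last by rewrite card_bool.
move=> x y xA yA /= hodd; apply: val_inj.
by rewrite -[val x]odd_double_half -[val y]odd_double_half hodd (H x y xA yA).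
Qed.

Lemma nat_pairs (a b c d u v w : nat) : u != v ->
  (u == a) || (u == b) -> (v == a) || (v == b) ->
  (u == c) || (u == d) -> (v == c) || (v == d) ->
  ((w == a) || (w == b)) = ((w == c) || (w == d)).
Proof. move=> *. apply/idP/idP => ?; lia. Qed.

Lemma core m (A : {set 'I_m}) a b c d : 3 <= #|A| ->
  A \subset pairset m a b -> A \subset pairset m c d -> pairset m a b = pairset m c d.
Proof.
move=> cA s1 s2.
case: (boolP [exists x in A, exists y in A, (val x)./2 != (val y)./2]).
  case/exists_inP => x xA /exists_inP [y yA hxy].
  apply/setP => z; rewrite !inE.
  move/subsetP: s1 => s1; move/subsetP: s2 => s2.
  have := s1 x xA; have := s1 y yA; have := s2 x xA; have := s2 y yA; rewrite !inE => *.
  exact: (@nat_pairs a b c d (val x)./2 (val y)./2).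
move=> hn; exfalso.
have : #|A| <= 2.
  apply: card_samehalf => x y xA yA.
  apply/eqP; apply: contraNT hn => hxy; apply/exists_inP; exists x => //.
  by apply/exists_inP; exists y.
lia.
Qed.

Lemma l1 k x : 2 <= k -> (x \in [:: 0; 1; 2 * k - 2; 2 * k - 1]) = ((x./2 == 0) || (x./2 == k - 1)).
Proof. move=> hk; rewrite !inE -!divn2; apply/idP/idP => ?; lia. Qed.

Lemma l2 k x : 2 <= k -> (x \in [:: 2 * k - 2; 2 * k - 1; 2 * k; 2 * k + 1]) = ((x./2 == k - 1) || (x./2 == k)).
Proof. move=> hk; rewrite !inE -!divn2; apply/idP/idP => ?; lia. Qed.

Lemma in_H_pairs n (B : {set 'I_(2*n)}) : in_H B -> exists a b, B = pairset (2*n) a b.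
Proof.
case/orP => /existsP [k /andP [hk /forallP h]].
- exists 0, (k - 1); apply/setP => x; rewrite inE -l1 //; exact/eqP/h.
- exists (k - 1), k; apply/setP => x; rewrite inE -l2 //; exact/eqP/h.
Qed.

Lemma H_inter n (H1 H2 A : {set 'I_(2*n)}) : in_H H1 -> in_H H2 ->
  A \subset H1 -> A \subset H2 -> 3 <= #|A| -> H1 = H2.
Proof.
move=> /in_H_pairs [a [b ->]] /in_H_pairs [c [d ->]] s1 s2 cA; exact: core cA s1 s2.
Qed.

Lemma exD n : 4 <= n -> exists D : {set 'I_(2*n)}, (#|D| == 4) && ~~ in_H D.
Proof.
move=> hn.
have h0 : 0 < 2*n by lia.
have h2 : 2 < 2*n by lia.
have h3 : 3 < 2*n by lia.
have h4 : 4 < 2*n by lia.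
have h6 : 6 < 2*n by lia.
have h7 : 7 < 2*n by lia.
exists [set Ordinal h2; Ordinal h3; Ordinal h6; Ordinal h7].
apply/andP; split.
  have -> : [set Ordinal h2; Ordinal h3; Ordinal h6; Ordinal h7] =
     Ordinal h2 |: (Ordinal h3 |: (Ordinal h6 |: [set Ordinal h7])).
    by apply/setP => z; rewrite !inE !orbA.
  by rewrite !cardsU1 cards1 !inE -!val_eqE.
apply/negP; case/orP => /existsP [k /andP [hk /forallP h]].
- by move: (h (Ordinal h0)); rewrite !inE -!val_eqE /=.
- move: (h (Ordinal h2)) (h (Ordinal h4)); rewrite !inE -!val_eqE /=.
  move=> /eqP e1 /eqP e2; lia.
Qed.

Theorem proposition3p2 (n : nat) (hn : 4 <= n) :
  exists I : {set {set 'I_(2 * n)}},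
    is_matroid I /\
    matroid_bases I = [set B : {set 'I_(2 * n)} | (#|B| == 4) && ~~ in_H B].
Proof.
pose I := [set A : {set 'I_(2*n)} | (#|A| <= 3) || ((#|A| == 4) && ~~ in_H A)].
have inI A : (A \in I) = (#|A| <= 3) || ((#|A| == 4) && ~~ in_H A) by rewrite inE.
exists I; clearbody I.
have cardI A : A \in I -> #|A| <= 4.
  by rewrite inI; case/orP => [h|/andP [/eqP -> _]] //; lia.
have exch : forall A B, A \in I -> B \in I -> #|A| < #|B| ->
    exists2 x, x \in B :\: A & x |: A \in I.
  move=> A B hA hB lt.
  have hBA : B :\: A != set0.
    apply/negP => /eqP e.
    have : B \subset A by rewrite -setD_eq0 e.
    move/subset_leq_card; lia.
  have cardxA x : x \in B :\: A -> #|x |: A| = #|A|.+1.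
    by rewrite inE => /andP [xA _]; rewrite cardsU1 (negbTE xA).
  case: (leqP #|A| 2) => cA.
    case/set0Pn: hBA => x hx; exists x => //.
    by rewrite inI cardxA //; apply/orP; left; lia.
  have cA3 : #|A| = 3 by have := cardI _ hA; have := cardI _ hB; lia.
  have cB4 : #|B| = 4 by have := cardI _ hA; have := cardI _ hB; lia.
  have hBnH : ~~ in_H B by move: hB; rewrite inI cB4.
  case: (leqP #|B :\: A| 1) => cD.
    have sAB : A \subset B.
      have e := cardsID A B.
      have : A :&: B == A.
        rewrite eqEcard subsetIl /= setIC -(leq_add2r #|B :\: A|) e cB4 cA3; lia.
      by move/eqP => <-; rewrite subsetIr.
    case/set0Pn: hBA => x hx; exists x => //.
    have : x |: A == B.
      rewrite eqEcard subUset sub1set sAB andbT cardxA // cB4 cA3 andbT.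
      by move: hx; rewrite inE => /andP [].
    by move/eqP ->; rewrite inI cB4 hBnH orbT.
  case/set0Pn: hBA => x hx.
  have : B :\: A :\ x != set0.
    by rewrite -card_gt0; move: cD; rewrite (cardsD1 x) hx; lia.
  case/set0Pn => y; rewrite in_setD1 => /andP [yx hy].
  case: (boolP (in_H (x |: A))) => hxH; last first.
    by exists x => //; rewrite inI cardxA // cA3 hxH.
  case: (boolP (in_H (y |: A))) => hyH; last first.
    by exists y => //; rewrite inI cardxA // cA3 hyH.
  exfalso.
  have e := H_inter hxH hyH (subsetUr _ _) (subsetUr _ _) (eq_leq (esym cA3)).
  have : y \in x |: A by rewrite e setU11.
  rewrite in_setU1 (negbTE yx) /=.
  by move: hy; rewrite inE => /andP [/negbTE ->].
split.
  split.
  - by apply/set0Pn; exists set0; rewrite inI cards0.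
  - move=> A B hB sAB.
    have le := subset_leq_card sAB.
    have cB := cardI _ hB.
    case: (leqP #|A| 3) => cA; first by rewrite inI cA.
    have eAB : A = B by apply/eqP; rewrite eqEcard sAB /=; exact: leq_trans cB cA.
    by rewrite eAB.
  - exact: exch.
apply/setP => B; rewrite /matroid_bases !inE.
apply/idP/idP.
- case/andP => hB /forall_inP hmax.
  move: (hB); rewrite inI; case/orP => [cB|//].
  exfalso. case: (exD hn) => D hD.
  have hDI : D \in I by rewrite inI hD orbT.
  have lt : #|B| < #|D| by move/andP: hD => [/eqP -> _]; lia.
  have [x hx hxB] := exch B D hB hDI lt.
  have := hmax _ hxB; rewrite subsetUr /= => /eqP e.
  by move: hx; rewrite inE -e setU11.
- case/andP => cB hnH; apply/andP; split; first by rewrite inI cB hnH orbT.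
  apply/forall_inP => C hC; apply/implyP => sBC.
  rewrite eq_sym eqEcard sBC /=; rewrite (eqP cB); exact: cardI _ hC.
Qed.
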